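(* For the name-generation monad $T$ on $[\mathsf{Inj},\mathsf{Set}]$, an object $X$ is sober if and only if it is a nominal set (i.e. the functor $X:\mathsf{Inj}\to\mathsf{Set}$ preserves pullbacks), and the associated sobrification monad $D$ is idempotent.
   Context: $\mathsf{Inj}$ is the category of finite sets and injections. $(TX)(a)=\operatorname{colim}_{b\in\mathsf{Inj}}X(a+b)$, with unit induced by $b=\emptyset$ and multiplication induced by $(a+b)+c\cong a+(b+c)$; a commutative monad on $[\mathsf{Inj},\mathsf{Set}]$. An object $X$ is sober for $T$ if $\eta_X:X\to TX$ is an equalizer of $\eta_{TX},T\eta_X:TX\to TTX$. $\theta_X:DX\to TX$ denotes the equalizer of $\eta_{TX},T\eta_X$; $D$ is a monad with $Dg$ the unique map with $\theta_Z\circ Dg=Tg\circ\theta_Y$, unit $e_X$ with $\theta_X\circ e_X=\eta_X$, and multiplication $m_X$ with $\theta_X\circ m_X=\mu_X\circ T\theta_X\circ\theta_{DX}$; idempotent means the multiplication is an isomorphism. *)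

(* Defs.v *)
From Stdlib Require Import Relations ClassicalEpsilon.
From mathcomp Require Import all_boot.



(* The category Inj of finite sets and injections (skeleton: objects are   *)
(* natural numbers n, standing for the finite set 'I_n).                   *)

Record injm (m n : nat) := Injm { injfun :> 'I_m -> 'I_n ; injfunP : injective injfun }.
Arguments Injm {m n} injfun injfunP.
Arguments injfun {m n} _ _.
Arguments injfunP {m n} _ _ _ _.

Definition idm (a : nat) : injm a a := @Injm a a id (@inj_id _).

Definition compm {a b c : nat} (g : injm b c) (f : injm a b) : injm a c :=
  @Injm a c (injfun g \o injfun f) (inj_comp (@injfunP _ _ g) (@injfunP _ _ f)).

Definition sum_fun {a a' b b' : nat} (f : 'I_a -> 'I_a') (g : 'I_b -> 'I_b')
  (u : 'I_a + 'I_b) : 'I_a' + 'I_b' :=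
  match u with inl i => inl (f i) | inr j => inr (g j) end.

Lemma sum_fun_inj {a a' b b' : nat} (f : injm a a') (g : injm b b') :
  injective (sum_fun f g).
Proof.
case=> [i|j] [i'|j'] //= [] E; congr (_ _); [exact: (injfunP f _ _ E)|exact: (injfunP g _ _ E)].
Qed.

Definition summ {a a' b b' : nat} (f : injm a a') (g : injm b b') :
  injm (a + b) (a' + b') :=
  @Injm (a + b) (a' + b') (unsplit \o sum_fun f g \o split)
    (inj_comp (can_inj unsplitK) (inj_comp (@sum_fun_inj a a' b b' f g) (can_inj splitK))).

Definition iotam (a : nat) : injm a (a + 0) :=
  @Injm a (a + 0) (@lshift a 0) (@lshift_inj a 0).

Definition assocm (a b c : nat) : injm (a + b + c) (a + (b + c)) :=
  @Injm _ _ (cast_ord (esym (addnA a b c))) (@cast_ord_inj _ _ _).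

Record prefun := PreFun {
  ob :> nat -> Type ;
  fmap : forall m n : nat, injm m n -> ob m -> ob n }.
Arguments fmap p {m n} _ _.

Definition is_functor (X : prefun) : Prop :=
  (forall a (x : X a), fmap X (idm a) x = x) /\
  (forall a b c (f : injm a b) (g : injm b c) (x : X a),
      fmap X (compm g f) x = fmap X g (fmap X f x)).

Definition natural (X Y : prefun) (h : forall a, X a -> Y a) : Prop :=
  forall a b (f : injm a b) (x : X a), h b (fmap X f x) = fmap Y f (h a x).

Definition is_iso {X Y : prefun} (h : forall a, X a -> Y a) : Prop :=
  natural X Y h /\
  exists k : forall a, Y a -> X a,
    natural Y X k /\ (forall a x, k a (h a x) = x) /\ (forall a y, h a (k a y) = y).

(* The name-generation monad T : (TX)(a) = colim_{b in Inj} X(a + b).      *)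
(* The colimit in Set is the quotient of the disjoint union               *)
(* Sigma_b X(a+b) by the equivalence relation generated by                 *)
(* (b, x) ~ (b', X(id_a + f) x) for f : b -> b'.                           *)

Definition Tpre (X : prefun) (a : nat) : Type := {b : nat & X (a + b)}.

Definition Tstep {X : prefun} {a : nat} (p q : Tpre X a) : Prop :=
  exists f : injm (projT1 p) (projT1 q),
    fmap X (summ (idm a) f) (projT2 p) = projT2 q.

Definition Tequiv {X : prefun} {a : nat} : relation (Tpre X a) :=
  clos_refl_sym_trans _ (@Tstep X a).

Definition Tob (X : prefun) (a : nat) : Type :=
  {P : Tpre X a -> Prop | exists p, P = Tequiv p}.

Definition Tcls {X : prefun} {a : nat} (p : Tpre X a) : Tob X a :=
  exist _ (Tequiv p) (ex_intro _ p erefl).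

Definition Trep {X : prefun} {a : nat} (q : Tob X a) : Tpre X a :=
  proj1_sig (constructive_indefinite_description _ (proj2_sig q)).

Definition Tmap (X : prefun) {a a' : nat} (g : injm a a') (q : Tob X a) : Tob X a' :=
  let p := Trep q in
  @Tcls X a' (existT _ (projT1 p) (fmap X (summ g (idm (projT1 p))) (projT2 p))).

Definition T (X : prefun) : prefun := @PreFun (Tob X) (@Tmap X).

Definition Tarr {X Y : prefun} (h : forall a, X a -> Y a) (a : nat) (q : T X a) : T Y a :=
  let p := Trep q in @Tcls Y a (existT _ (projT1 p) (h _ (projT2 p))).

(* unit, induced by b = empty set *)
Definition eta {X : prefun} (a : nat) (x : X a) : T X a :=
  @Tcls X a (existT _ 0 (fmap X (iotam a) x)).

Definition mu {X : prefun} {a : nat} (q : T (T X) a) : T X a :=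
  let p := Trep q in
  let r := Trep (projT2 p) in
  @Tcls X a (existT _ (projT1 p + projT1 r)
                    (fmap X (assocm a (projT1 p) (projT1 r)) (projT2 r))).

Definition is_equalizer {E Y W : prefun} (e : forall a, E a -> Y a)
  (f g : forall a, Y a -> W a) : Prop :=
  natural E Y e /\
  (forall a x, f a (e a x) = g a (e a x)) /\
  (forall Z : prefun, is_functor Z ->
   forall h : forall a, Z a -> Y a, natural Z Y h ->
   (forall a z, f a (h a z) = g a (h a z)) ->
   exists u : forall a, Z a -> E a,
     natural Z E u /\ (forall a z, e a (u a z) = h a z) /\
     (forall u' : forall a, Z a -> E a, natural Z E u' ->
        (forall a z, e a (u' a z) = h a z) -> forall a z, u' a z = u a z)).

Definition sober (X : prefun) : Prop :=
  is_equalizer (eta (X := X)) (eta (X := T X)) (Tarr (eta (X := X))).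

Definition is_pb_Inj {p a b c : nat} (f : injm a c) (g : injm b c)
  (h : injm p a) (k : injm p b) : Prop :=
  (forall i, f (h i) = g (k i)) /\
  forall (d : nat) (h' : injm d a) (k' : injm d b),
    (forall i, f (h' i) = g (k' i)) ->
    exists u : injm d p,
      (forall i, h (u i) = h' i) /\ (forall i, k (u i) = k' i) /\
      (forall u' : injm d p, (forall i, h (u' i) = h' i) ->
          (forall i, k (u' i) = k' i) -> forall i, u' i = u i).

Definition is_pb_Set {P A B C : Type} (f : A -> C) (g : B -> C)
  (h : P -> A) (k : P -> B) : Prop :=
  (forall x, f (h x) = g (k x)) /\
  forall (D : Type) (h' : D -> A) (k' : D -> B),
    (forall d, f (h' d) = g (k' d)) ->
    exists! u : D -> P, (forall d, h (u d) = h' d) /\ (forall d, k (u d) = k' d).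

Definition nominal (X : prefun) : Prop :=
  forall (p a b c : nat) (f : injm a c) (g : injm b c) (h : injm p a) (k : injm p b),
    is_pb_Inj f g h k ->
    is_pb_Set (fmap X f) (fmap X g) (fmap X h) (fmap X k).

(* Main.v *)
Require Import Defs.
From Stdlib Require Import Relations ClassicalEpsilon FunctionalExtensionality ProofIrrelevance PropExtensionality.
From mathcomp Require Import all_boot.


Lemma injm_eq m n (f g : injm m n) : (forall i, f i = g i) -> f = g.
Proof.
case: f g => [f fP] [g gP] /= H.
have E := functional_extensionality _ _ H; subst g.
by rewrite (proof_irrelevance _ fP gP).
Qed.

Lemma inj_le (A B : finType) : #|A| <= #|B| -> exists h : A -> B, injective h.
Proof.
move=> H.
exists (fun x => enum_val (widen_ord H (enum_rank x))).
move=> x y /= E.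
have := enum_val_inj E.
move/(congr1 val) => /= /val_inj.
exact: enum_rank_inj.
Qed.

Lemma ext_inj m n (P : pred 'I_m) (f : 'I_m -> 'I_n) :
  {in P &, injective f} -> m <= n ->
  exists g : injm m n, forall i, P i -> g i = f i.
Proof.
move=> finj mn.
pose S2 := [set f i | i in P].
have cS2 : #|S2| = #|P| by rewrite card_in_imset.
have H : #|{: {i : 'I_m | ~~ P i}}| <= #|{: {j : 'I_n | j \notin S2}}|.
  rewrite !card_sig.
  have e1 := cardC P. have e2 := cardC S2.
  rewrite card_ord in e1. rewrite card_ord in e2.
  have -> : #|[pred x | ~~ P x]| = #|[predC P]| by apply: eq_card.
  have -> : #|[pred x | x \notin S2]| = #|[predC S2]| by apply: eq_card.
  by rewrite -(leq_add2l #|P|) e1 -cS2 e2.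
have [h hinj] := @inj_le {i : 'I_m | ~~ P i} {j : 'I_n | j \notin S2} H.
pose g i := match (insub i : option {i : 'I_m | ~~ P i}) with Some s => val (h s) | None => f i end.
have gP : injective g.
  move=> i1 i2; rewrite /g.
  case: insubP => [s1 nP1 v1|]; case: insubP => [s2 nP2 v2|] //.
  - by move/val_inj/hinj => E; rewrite -v1 -v2 E.
  - rewrite negbK => P2 E.
    have := valP (h s1); rewrite E => /negP; case.
    by apply/imsetP; exists i2.
  - rewrite negbK => P1 E.
    have := valP (h s2); rewrite -E => /negP; case.
    by apply/imsetP; exists i1.
  - rewrite !negbK => P2 P1. exact: finj.
exists (Injm g gP) => i Pi /=.
rewrite /g; case: insubP => // s; by rewrite Pi.
Qed.


Lemma split_l m n (i : 'I_m) : split (lshift n i) = inl i.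
Proof. exact: (unsplitK (inl _ i)). Qed.
Lemma split_r m n (j : 'I_n) : split (rshift m j) = inr j.
Proof. exact: (unsplitK (inr _ j)). Qed.

Lemma summ_l a a' b b' (f : injm a a') (g : injm b b') i :
  summ f g (lshift b i) = lshift b' (f i).
Proof. by rewrite /summ /= split_l. Qed.
Lemma summ_r a a' b b' (f : injm a a') (g : injm b b') j :
  summ f g (rshift a j) = rshift a' (g j).
Proof. by rewrite /summ /= split_r. Qed.

Lemma lr_neq m n (i : 'I_m) (j : 'I_n) : lshift n i <> rshift m j.
Proof. move/(congr1 val) => /= E. by have := ltn_ord i; rewrite E ltnNge leq_addr. Qed.

Lemma lshift_inj' m n : injective (@lshift m n). Proof. exact: lshift_inj. Qed.
Lemma rshift_inj' m n : injective (@rshift m n). Proof. exact: rshift_inj. Qed.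

Lemma assocm_ll a b c (i : 'I_a) : assocm a b c (lshift c (lshift b i)) = lshift (b + c) i.
Proof. exact: val_inj. Qed.
Lemma assocm_lr a b c (j : 'I_b) : assocm a b c (lshift c (rshift a j)) = rshift a (lshift c j).
Proof. exact: val_inj. Qed.
Lemma assocm_r a b c (k : 'I_c) : assocm a b c (rshift (a + b) k) = rshift a (rshift b k).
Proof. apply: val_inj => /=. by rewrite addnA. Qed.

Lemma iotam_v a i : iotam a i = lshift 0 i.
Proof. by []. Qed.

Definition copair_fun {m n k} (f : 'I_m -> 'I_k) (g : 'I_n -> 'I_k) (u : 'I_(m+n)) : 'I_k :=
  match split u with inl i => f i | inr j => g j end.

Lemma copair_l {m n k} (f : 'I_m -> 'I_k) (g : 'I_n -> 'I_k) i : copair_fun f g (lshift n i) = f i.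
Proof. by rewrite /copair_fun split_l. Qed.
Lemma copair_r {m n k} (f : 'I_m -> 'I_k) (g : 'I_n -> 'I_k) j : copair_fun f g (rshift m j) = g j.
Proof. by rewrite /copair_fun split_r. Qed.

Lemma copair_inj {m n k} (f : 'I_m -> 'I_k) (g : 'I_n -> 'I_k) :
  injective f -> injective g -> (forall i j, f i <> g j) -> injective (copair_fun f g).
Proof.
move=> fi gi d u v.
case: (split_ordP u) => [i ->|j ->]; case: (split_ordP v) => [i' ->|j' ->];
  rewrite ?copair_l ?copair_r.
- by move/fi ->.
- by move/d.
- by move/esym/d.
- by move/gi ->.
Qed.

Definition copair {m n k} {f : injm m k} {g : injm n k} (H : forall i j, f i <> g j) : injm (m + n) k :=
  Injm (copair_fun f g) (copair_inj f g (injfunP f) (injfunP g) H).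

Lemma copairm_l {m n k} (f : injm m k) (g : injm n k) H i : @copair _ _ _ f g H (lshift n i) = f i.
Proof. exact: copair_l. Qed.
Lemma copairm_r {m n k} (f : injm m k) (g : injm n k) H j : @copair _ _ _ f g H (rshift m j) = g j.
Proof. exact: copair_r. Qed.

Definition lshm m n : injm m (m + n) := Injm (@lshift m n) (@lshift_inj m n).
Definition rshm m n : injm n (m + n) := Injm (@rshift m n) (@rshift_inj m n).

Lemma injm_le m n (f : injm m n) : m <= n.
Proof. have := @leq_card _ _ f (injfunP f). by rewrite !card_ord. Qed.

Lemma ext_along k m n (v : injm k m) (u : injm k n) : m <= n ->
  exists g : injm m n, forall i, g (v i) = u i.
Proof.
move=> mn.
pose P := [pred j : 'I_m | [exists i, v i == j]].
pose f (j : 'I_m) := match [pick i | v i == j] with Some i => u i | None => widen_ord mn j end.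
have fv i : f (v i) = u i.
  rewrite /f; case: pickP => [i' /eqP E|/(_ i)]; last by rewrite eqxx.
  by rewrite (injfunP v _ _ E).
have : {in P &, injective f}.
  move=> j1 j2 /existsP [i1 /eqP <-] /existsP [i2 /eqP <-].
  by rewrite !fv => /(injfunP u) ->.
move/ext_inj => /(_ mn) [g Hg].
exists g => i. rewrite Hg ?fv //. by apply/existsP; exists i.
Qed.

Lemma inj_inv m n (f : injm m n) : n <= m ->
  exists g : injm n m, (forall i, g (f i) = i) /\ (forall j, f (g j) = j).
Proof.
move=> nm.
have bf : bijective f.
  apply: inj_card_bij; first exact: (injfunP f). by rewrite !card_ord.
case: bf => g gK fK.
have gi : injective g by exact: can_inj fK.
by exists (Injm g gi).
Qed.

Lemma fix_left a b c (phi : injm (a + b) (a + c)) :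
  (forall i, phi (lshift b i) = lshift c i) ->
  exists g : injm b c, forall u, phi u = summ (idm a) g u.
Proof.
move=> H.
have ex : forall j : 'I_b, exists k : 'I_c, phi (rshift a j) = rshift a k.
  move=> j. case: (split_ordP (phi (rshift a j))) => [i E|k E]; last by exists k.
  by move: E; rewrite -H => /(injfunP phi) /esym /lr_neq.
have [g Hg] := fin_all_exists ex.
have gi : injective g.
  move=> j1 j2 E. apply: (@rshift_inj a). apply: (injfunP phi). by rewrite !Hg E.
exists (Injm g gi) => u.
case: (split_ordP u) => [i ->|j ->]; by rewrite ?summ_l ?summ_r /= ?H ?Hg.
Qed.

Lemma compmE m n k (g : injm n k) (f : injm m n) i : compm g f i = g (f i).
Proof. by []. Qed.
Lemma idmE m i : idm m i = i.
Proof. by []. Qed.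

Ltac ssimp := repeat (first [rewrite compmE | rewrite idmE | rewrite iotam_v | rewrite summ_l | rewrite summ_r
  | rewrite assocm_ll | rewrite assocm_lr | rewrite assocm_r | rewrite copairm_l | rewrite copairm_r]).

Lemma lshmE m n i : lshm m n i = lshift n i. Proof. by []. Qed.
Lemma rshmE m n j : rshm m n j = rshift m j. Proof. by []. Qed.

Definition zm (b : nat) : injm 0 b := Injm (fun i : 'I_0 => match i with Ordinal _ H => False_rect _ (notF H) end) (fun i => match i with Ordinal _ H => False_ind _ (notF H) end).

Ltac ssimp2 := repeat (first [rewrite compmE | rewrite idmE | rewrite iotam_v | rewrite lshmE | rewrite rshmE | rewrite summ_l | rewrite summ_r
  | rewrite assocm_ll | rewrite assocm_lr | rewrite assocm_r | rewrite copairm_l | rewrite copairm_r]).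


Definition tp {X : prefun} {a b : nat} (x : X (a + b)) : Tpre X a :=
  existT (fun b => X (a + b)) b x.

Lemma fmap_ext (X : prefun) {m n} {f g : injm m n} {x} : (forall i, f i = g i) -> fmap X f x = fmap X g x.
Proof. by move/injm_eq ->. Qed.

Lemma fmap_idp {X : prefun} : is_functor X -> forall a (f : injm a a) x, (forall i, f i = i) -> fmap X f x = x.
Proof. move=> [H1 _] a f x E. rewrite (fmap_ext X (g := idm a) E). exact: H1. Qed.

Lemma fmap_comp' {X : prefun} (HX : is_functor X) a b c (f : injm a b) (g : injm b c) (h : injm a c) x :
  (forall i, h i = g (f i)) -> fmap X h x = fmap X g (fmap X f x).
Proof. case: HX => [_ H2] E. rewrite -H2. exact: fmap_ext. Qed.

Lemma fmap_comp2 {X : prefun} (HX : is_functor X) a b b' c (f : injm a b) (g : injm b c) (f' : injm a b') (g' : injm b' c) x :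
  (forall i, g (f i) = g' (f' i)) -> fmap X g (fmap X f x) = fmap X g' (fmap X f' x).
Proof. move=> E. rewrite -!(proj2 HX). apply: fmap_ext => i /=. exact: E. Qed.

Lemma sig_eq (A : Type) (P : A -> Prop) (x y : sig P) : proj1_sig x = proj1_sig y -> x = y.
Proof. case: x y => [x px] [y py] /= E; subst y. by rewrite (proof_irrelevance _ px py). Qed.

Definition RT {X : prefun} {a : nat} (p q : Tpre X a) : Prop :=
  exists e (phi : injm (a + projT1 p) e) (psi : injm (a + projT1 q) e),
    (forall i, phi (lshift _ i) = psi (lshift _ i)) /\ fmap X phi (projT2 p) = fmap X psi (projT2 q).

Lemma Tequiv_RT {X : prefun} : is_functor X -> forall a (p q : Tpre X a), Tequiv p q -> RT p q.
Proof.
move=> HX a p q; elim=> {p q}.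
- move=> [b x] [b' y] [f /= E]. exists (a + b'), (summ (idm a) f), (idm _); split.
    by move=> i; rewrite summ_l.
  by rewrite E (proj1 HX).
- move=> [b x]; exists (a + b), (idm _), (idm _); by split.
- move=> p q _ [e [phi [psi [H1 H2]]]]; exists e, psi, phi; by split.
- move=> p q r _ [e1 [phi1 [psi1 [H1 H2]]]] _ [e2 [phi2 [psi2 [H3 H4]]]].
  have [g Hg] := @ext_along _ _ (e1 + e2) phi2 (compm (lshm e1 e2) psi1) (leq_addl _ _).
  exists (e1 + e2), (compm (lshm e1 e2) phi1), (compm g psi2); split.
    by move=> i /=; rewrite H1 -H3 Hg.
  rewrite !(proj2 HX) H2 -H4 -!(proj2 HX). apply: fmap_ext => i /=. by rewrite Hg.
Qed.

Lemma RT_Tequiv {X : prefun} : is_functor X -> forall a (p q : Tpre X a), RT p q -> Tequiv p q.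
Proof.
move=> HX a [b x] [b' y] [e [phi [psi [H1 H2]]]] /=.
move: phi psi H1 H2 => /= phi psi H1 H2.
have [k Hk] := @ext_along _ _ (a + e) (compm phi (lshm a b)) (lshm a e) (leq_addl _ _).
have [g1 Hg1] := @fix_left a b e (compm k phi) (fun i => Hk i).
have [g2 Hg2] := @fix_left a b' e (compm k psi) (fun i => etrans (congr1 k (esym (H1 i))) (Hk i)).
apply: (rst_trans _ _ _ (tp (fmap X (summ (idm a) g1) x))).
  apply: rst_step; by exists g1.
apply: rst_sym. apply: (rst_trans _ _ _ (tp (fmap X (summ (idm a) g2) y))).
  apply: rst_step; by exists g2.

have -> : fmap X (summ (idm a) g2) y = fmap X (summ (idm a) g1) x.
  rewrite -(fmap_ext X Hg1) -(fmap_ext X Hg2) !(proj2 HX). by rewrite H2.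
exact: rst_refl.
Qed.


Lemma Tequiv_sym {X : prefun} {a} {p q : Tpre X a} : Tequiv p q -> Tequiv q p.
Proof. exact: rst_sym. Qed.
Lemma Tequiv_trans {X : prefun} {a} {p q r : Tpre X a} : Tequiv p q -> Tequiv q r -> Tequiv p r.
Proof. exact: rst_trans. Qed.

Lemma Tcls_eq {X : prefun} {a} (p q : Tpre X a) : Tcls p = Tcls q <-> Tequiv p q.
Proof.
split.
- move/(congr1 (@proj1_sig _ _)) => /= E. rewrite E. exact: rst_refl.
- move=> H. apply: sig_eq => /=. apply: functional_extensionality => r.
  apply: propositional_extensionality; split => H'.
  + exact: rst_trans _ _ _ _ _ (rst_sym _ _ _ _ H) H'.
  + exact: rst_trans _ _ _ _ _ H H'.
Qed.

Lemma TrepK {X : prefun} {a} (t : Tob X a) : Tcls (Trep t) = t.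
Proof.
apply: sig_eq => /=. rewrite /Trep.
case: (constructive_indefinite_description _ _) => p /= E. by rewrite E.
Qed.

Lemma Trep_equiv {X : prefun} {a} (p : Tpre X a) : Tequiv p (Trep (Tcls p)).
Proof. apply/Tcls_eq. by rewrite TrepK. Qed.

Lemma Tcls_surj {X : prefun} {a} (t : Tob X a) : exists b (x : X (a + b)), t = Tcls (tp x).
Proof. rewrite -(TrepK t). case: (Trep t) => b x. by exists b, x. Qed.

Definition mapT (X : prefun) {a a'} (g : injm a a') (p : Tpre X a) : Tpre X a' :=
  tp (fmap X (summ g (idm (projT1 p))) (projT2 p)).

Lemma mapT_resp (X : prefun) (HX : is_functor X) a a' (g : injm a a') (p q : Tpre X a) :
  Tequiv p q -> Tequiv (mapT X g p) (mapT X g q).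
Proof.
elim=> {p q}.
- move=> [b x] [b' y] [f /= E]. apply: rst_step. exists f => /=.
  rewrite -E. apply: fmap_comp2 => // u.
  case: (split_ordP u) => [i ->|j ->]; by rewrite !(summ_l, summ_r).
- move=> p; exact: rst_refl.
- move=> p q _ H; exact: rst_sym.
- move=> p q r _ H1 _ H2; exact: rst_trans H1 H2.
Qed.

Lemma Tmap_cls (X : prefun) (HX : is_functor X) a a' (g : injm a a') b (x : X (a + b)) :
  Tmap X g (Tcls (tp x)) = Tcls (tp (fmap X (summ g (idm b)) x)).
Proof.
rewrite /Tmap. apply/Tcls_eq.
have := @mapT_resp X HX _ _ g _ _ (Tequiv_sym (Trep_equiv (tp x))).
by rewrite /mapT.
Qed.

Definition mapA {X Y : prefun} (h : forall a, X a -> Y a) {a} (p : Tpre X a) : Tpre Y a :=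
  tp (h _ (projT2 p)).

Lemma mapA_resp (X Y : prefun) (h : forall a, X a -> Y a) (hn : natural X Y h) a (p q : Tpre X a) :
  Tequiv p q -> Tequiv (mapA h p) (mapA h q).
Proof.
elim=> {p q}.
- move=> [b x] [b' y] [f /= E]. apply: rst_step. exists f => /=.
  by rewrite -E hn.
- move=> p; exact: rst_refl.
- move=> p q _ H; exact: rst_sym.
- move=> p q r _ H1 _ H2; exact: rst_trans H1 H2.
Qed.

Lemma Tarr_cls (X Y : prefun) (h : forall a, X a -> Y a) (hn : natural X Y h) a b (x : X (a + b)) :
  Tarr h a (Tcls (tp x)) = Tcls (tp (h _ x)).
Proof.
rewrite /Tarr. apply/Tcls_eq.
have := @mapA_resp X Y h hn _ _ _ (Tequiv_sym (Trep_equiv (tp x))).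
by rewrite /mapA.
Qed.

Lemma T_functor {X : prefun} (HX : is_functor X) : is_functor (T X).
Proof.
split.
- move=> a t. have [b [x ->]] := Tcls_surj t. rewrite /= Tmap_cls //.
  congr (Tcls (tp _)). apply: (fmap_idp HX) => u.
  case: (split_ordP u) => [i ->|j ->]; by rewrite !(summ_l, summ_r).
- move=> a b c f g t. have [d [x ->]] := Tcls_surj t. rewrite /= !Tmap_cls //.
  congr (Tcls (tp _)). apply: (fmap_comp' HX) => u.
  case: (split_ordP u) => [i ->|j ->]; by rewrite !(summ_l, summ_r).
Qed.

Lemma eta_nat {Y : prefun} (HY : is_functor Y) : natural Y (T Y) (@eta Y).
Proof.
move=> a b f y. rewrite /eta /= Tmap_cls //. congr (Tcls (tp _)).
apply: fmap_comp2 => // i. by rewrite !iotam_v summ_l.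
Qed.

Lemma Tarr_nat {X Y : prefun} (HX : is_functor X) (HY : is_functor Y) (h : forall a, X a -> Y a) :
  natural X Y h -> natural (T X) (T Y) (Tarr h).
Proof.
move=> hn a b f t. have [d [x ->]] := Tcls_surj t.
rewrite /= Tmap_cls // !Tarr_cls // Tmap_cls //. by rewrite hn.
Qed.

Lemma T_inj {X : prefun} (HX : is_functor X) a a' (f : injm a a') : injective (Tmap X f).
Proof.
move=> t1 t2. have [b [x ->]] := Tcls_surj t1. have [b' [x' ->]] := Tcls_surj t2.
rewrite !Tmap_cls // => /Tcls_eq /(Tequiv_RT HX) [e [phi [psi [H1 H2]]]].
apply/Tcls_eq/(RT_Tequiv HX).
exists e, (compm phi (summ f (idm b))), (compm psi (summ f (idm b'))); split.
  move=> i. by rewrite !compmE !summ_l H1.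
by rewrite !(proj2 HX).
Qed.


Definition Mf {X : prefun} {a} (p : Tpre (T X) a) : Tob X a :=
  let r := Trep (projT2 p) in
  @Tcls X a (existT _ (projT1 p + projT1 r) (fmap X (assocm a (projT1 p) (projT1 r)) (projT2 r))).

Lemma mu_Mf {X : prefun} {a} (q : T (T X) a) : mu q = Mf (Trep q).
Proof. by []. Qed.

Lemma inner_resp {X : prefun} (HX : is_functor X) {a c} {p q : Tpre X (a + c)} :
  Tequiv p q ->
  @Tcls X a (tp (fmap X (assocm a c (projT1 p)) (projT2 p))) =
  @Tcls X a (tp (fmap X (assocm a c (projT1 q)) (projT2 q))).
Proof.
elim=> {p q}.
- move=> [d x] [d' y] [f /= E]. apply/Tcls_eq/rst_step. exists (summ (idm c) f) => /=.
  rewrite -E. apply: fmap_comp2 => // u.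
  case: (split_ordP u) => [w ->|k ->]; last by ssimp.
  case: (split_ordP w) => [i ->|j ->]; by ssimp.
- by [].
- by move=> p q _ ->.
- by move=> p q r _ -> _ ->.
Qed.

Lemma M_inner {X : prefun} (HX : is_functor X) a c d (x : X (a + c + d)) :
  Mf (@tp (T X) a c (Tcls (tp x))) = Tcls (tp (fmap X (assocm a c d) x)).
Proof.
rewrite /Mf /=.
have H := (inner_resp HX (Tequiv_sym (Trep_equiv (@tp X (a + c) d x)))).
exact: H.
Qed.

Lemma M_outer {X : prefun} (HX : is_functor X) {a} {p q : Tpre (T X) a} :
  Tequiv p q -> Mf p = Mf q.
Proof.
elim=> {p q}.
- move=> [c t] [c' t'] [f E]. move: f E => /= f E. subst t'.
  have [d [x ->]] := Tcls_surj t.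
  rewrite /= Tmap_cls // !M_inner //.
  apply/Tcls_eq/rst_step. exists (summ f (idm d)) => /=.
  apply: fmap_comp2 => // u.
  case: (split_ordP u) => [w ->|k ->]; last by ssimp.
  case: (split_ordP w) => [i ->|j ->]; by ssimp.
- by [].
- by move=> p q _ ->.
- by move=> p q r _ -> _ ->.
Qed.

Lemma mu_cls {X : prefun} (HX : is_functor X) a c d (x : X (a + c + d)) :
  mu (Tcls (@tp (T X) a c (Tcls (tp x)))) = Tcls (tp (fmap X (assocm a c d) x)).
Proof.
rewrite mu_Mf -(M_outer HX (Trep_equiv _)). exact: M_inner.
Qed.

Lemma mu_Tarr_eta {X D : prefun} (HX : is_functor X) (HD : is_functor D)
  (th : forall a, D a -> T X a) (thn : natural D (T X) th) a (w : D a) :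
  mu (Tarr th a (eta a w)) = th a w.
Proof.
rewrite /eta Tarr_cls // thn.
have [d [x ->]] := Tcls_surj (th a w).
rewrite /= Tmap_cls // mu_cls //.
apply/Tcls_eq/Tequiv_sym/rst_step. exists (idm d : injm d (0 + d)) => /=.
rewrite -(proj2 HX). apply: fmap_ext => u.
case: (split_ordP u) => [i ->|j ->]; apply: val_inj.
- by ssimp.
- rewrite compmE (@summ_r a a d (0 + d) (idm a) (idm d) j) (@summ_r a (a + 0) d d (iotam a) (idm d) j).
  by rewrite (@assocm_r a 0 d (idm d j)).
Qed.

Lemma eta_eqz {Y : prefun} (HY : is_functor Y) a (y : Y a) :
  eta (X := T Y) a (eta a y) = Tarr (eta (X := Y)) a (eta a y).
Proof.
rewrite {2}/eta Tarr_cls; last exact: eta_nat.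
rewrite /eta /=. congr (Tcls (tp _)).
exact: (esym (eta_nat HY _ _ (iotam a) y)).
Qed.


Definition Cond (Y : prefun) a b (y : Y (a + b)) : Prop :=
  exists e (Phi Psi : injm (a + b) e),
    (forall i, Phi (lshift b i) = Psi (lshift b i)) /\
    (forall j j', Phi (rshift a j) <> Psi (rshift a j')) /\
    fmap Y Phi y = fmap Y Psi y.

Definition Eqz (Y : prefun) a (t : T Y a) : Prop :=
  eta (X := T Y) a t = Tarr (eta (X := Y)) a t.

Lemma eqz_cond {Y : prefun} (HY : is_functor Y) a b (y : Y (a + b)) :
  Eqz Y a (Tcls (tp y)) -> Cond Y a b y.
Proof.
rewrite /Eqz {1}/eta /= Tmap_cls // Tarr_cls; last exact: eta_nat HY.
rewrite /eta.
move/Tcls_eq/(Tequiv_RT (T_functor HY)) => [e [phi [psi [H1 H2]]]].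
move: phi psi H1 H2 => /= phi psi H1 H2.
rewrite !Tmap_cls // in H2.
move/Tcls_eq/(Tequiv_RT HY): H2 => [e' [phi' [psi' [H3 H4]]]].
move: phi' psi' H3 H4 => /= phi' psi' H3 H4.
exists e', (compm phi' (compm (summ phi (idm b)) (summ (iotam a) (idm b)))),
  (compm psi' (compm (summ psi (idm 0)) (iotam (a + b)))).
split; [|split].
- move=> i. ssimp2. by rewrite H1 H3.
- move=> j j'. ssimp2. rewrite -H3. move/(injfunP phi'). by move/esym/lr_neq.
- by rewrite !(proj2 HY).
Qed.

Lemma cond_eqz {Y : prefun} (HY : is_functor Y) a b (y : Y (a + b)) :
  Cond Y a b y -> Eqz Y a (Tcls (tp y)).
Proof.
move=> [e [Phi [Psi [H1 [H2 H3]]]]].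
rewrite /Eqz {1}/eta /= Tmap_cls // Tarr_cls; last exact: eta_nat HY.
rewrite /eta.
set s := Tcls (tp (fmap Y (summ (iotam a) (idm b)) y)).
apply/Tcls_eq.
apply: (rst_trans _ _ _ (@tp (T Y) a b (Tmap Y (summ (idm a) (zm b)) s))).
  apply: rst_step. by exists (zm b).
have Hdis : forall u j, Psi u <> compm Phi (rshm a b) j.
  move=> u j; rewrite compmE rshmE.
  case: (split_ordP u) => [i ->|j' ->].
  + rewrite -H1 => /(injfunP Phi). exact: lr_neq.
  + move=> E. exact: (H2 j j' (esym E)).
have -> : Tmap Y (summ (idm a) (zm b)) s = Tcls (tp (fmap Y (iotam (a + b)) y)).
  rewrite /s Tmap_cls //. apply/Tcls_eq/(RT_Tequiv HY).
  pose phi' := copair Hdis.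
  exists e, phi', (compm phi' (summ (idm (a + b)) (zm b))); split.
    move=> w. by ssimp2.
  rewrite /= -!(proj2 HY).
  have -> : fmap Y (compm (compm phi' (summ (summ (idm a) (zm b)) (idm b))) (summ (iotam a) (idm b))) y = fmap Y Phi y.
    apply: fmap_ext => u. rewrite /phi'.
    case: (split_ordP u) => [i ->|j ->]; ssimp2 => //; by rewrite H1.
  have -> : fmap Y (compm (compm phi' (summ (idm (a + b)) (zm b))) (iotam (a + b))) y = fmap Y Psi y.
    apply: fmap_ext => u. rewrite /phi'. by ssimp2.
  exact: H3.
exact: rst_refl.
Qed.


Definition Rep (a : nat) : prefun :=
  @PreFun (fun n => injm a n) (fun m n (f : injm m n) (g : injm a m) => compm f g).

Lemma Rep_functor a : is_functor (Rep a).
Proof. split => *; exact: injm_eq. Qed.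

Lemma eqz_inj {E Y W : prefun} (HE : is_functor E) (e : forall a, E a -> Y a) (f g : forall a, Y a -> W a) :
  is_equalizer e f g -> forall a, injective (e a).
Proof.
move=> [en [eq univ]] a x1 x2 E12.
have [u [un [ue uu]]] := univ (Rep a) (Rep_functor a) (fun n k => e n (fmap E k x1))
  (fun m n k z => etrans (congr1 (e n) (proj2 HE _ _ _ z k x1)) (en _ _ k _))
  (fun n k => eq n _).
have A := uu (fun n k => fmap E k x1) (fun m n k z => proj2 HE _ _ _ z k x1) (fun _ _ => erefl) a (idm a).
have B := uu (fun n k => fmap E k x2) (fun m n k z => proj2 HE _ _ _ z k x2) _ a (idm a).
rewrite !(proj1 HE) in A B. rewrite A B //.
move=> n k /=. by rewrite !en E12.
Qed.

Lemma eqz_surj {E Y W : prefun} (HY : is_functor Y) (e : forall a, E a -> Y a) (f g : forall a, Y a -> W a) :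
  is_equalizer e f g -> natural Y W f -> natural Y W g ->
  forall a t, f a t = g a t -> exists x, e a x = t.
Proof.
move=> [en [eq univ]] fn gn a t ft.
have heq : forall n (k : injm a n), f n (fmap Y k t) = g n (fmap Y k t).
  move=> n k. by rewrite fn gn ft.
have [u [un [ue uu]]] := univ (Rep a) (Rep_functor a) (fun n k => fmap Y k t)
  (fun m n k z => proj2 HY _ _ _ z k t) heq.
exists (u a (idm a)). by rewrite ue (proj1 HY).
Qed.

Lemma mk_eq {E Y W : prefun} (e : forall a, E a -> Y a) (f g : forall a, Y a -> W a) :
  natural E Y e -> (forall a, injective (e a)) -> (forall a x, f a (e a x) = g a (e a x)) ->
  (forall a t, f a t = g a t -> exists x, e a x = t) -> is_equalizer e f g.
Proof.
move=> en ei eq es; split; first done; split; first done.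
move=> Z HZ h hn heq.
pose u a z := proj1_sig (constructive_indefinite_description _ (es a (h a z) (heq a z))).
have ue : forall a z, e a (u a z) = h a z.
  move=> a0 z. exact: (proj2_sig (constructive_indefinite_description _ (es a0 (h a0 z) (heq a0 z)))).
exists u; split.
  move=> a b k z. apply: (ei b). by rewrite ue hn en ue.
split; first exact: ue.
move=> u' _ ue' a z. apply: (ei a). by rewrite ue ue'.
Qed.

Definition Mono (X : prefun) : Prop := forall m n (f : injm m n), injective (fmap X f).
Definition Shat (X : prefun) : Prop :=
  forall a b (y : X (a + b)), Cond X a b y -> exists x, y = fmap X (lshm a b) x.

Lemma eta_cls_lsh {X : prefun} (HX : is_functor X) a b (x : X a) :
  Tcls (tp (fmap X (lshm a b) x)) = eta a x.
Proof.
apply/Tcls_eq/Tequiv_sym/rst_step. exists (zm b) => /=.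
rewrite -(proj2 HX). apply: fmap_ext => i. by ssimp2.
Qed.

Lemma cls_eta_inv {X : prefun} (HX : is_functor X) (M : Mono X) a b (y : X (a + b)) x :
  Tcls (tp y) = eta a x -> y = fmap X (lshm a b) x.
Proof.
move/Tcls_eq/(Tequiv_RT HX) => [e [phi [psi [H1 H2]]]].
move: phi psi H1 H2 => /= phi psi H1 H2.
apply: (M _ _ phi). rewrite H2 -!(proj2 HX). apply: fmap_ext => i. ssimp2. by rewrite H1.
Qed.

Lemma eta_inj_mono {X : prefun} (HX : is_functor X) :
  (forall a, injective (eta (X := X) a)) -> Mono X.
Proof.
move=> Hi m n f x x' E. apply: Hi.
apply/Tcls_eq/(RT_Tequiv HX).
pose phi := compm f (Injm (cast_ord (addn0 m)) (@cast_ord_inj _ _ _)).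
have K : forall i, compm phi (iotam m) i = f i.
  move=> i. rewrite !compmE /=. congr (f _). exact: val_inj.
exists n, phi, phi; split; first by [].
rewrite /= -!(proj2 HX) !(fmap_ext X K). exact: E.
Qed.

Lemma mono_eta_inj {X : prefun} (HX : is_functor X) (M : Mono X) a : injective (eta (X := X) a).
Proof.
move=> x x' /Tcls_eq/(Tequiv_RT HX) [e [phi [psi [H1 H2]]]].
move: phi psi H1 H2 => /= phi psi H1 H2.
have E : phi = psi.
  apply: injm_eq => u. case: (split_ordP u) => [i ->|j ->]; first exact: H1.
  by case: j.
subst psi. exact: (M _ _ (iotam a) _ _ (M _ _ phi _ _ H2)).
Qed.

Lemma sober_char {X : prefun} (HX : is_functor X) : sober X <-> Mono X /\ Shat X.
Proof.
split.
- move=> S.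
  have inj := eqz_inj HX _ _ _ S.
  have M := eta_inj_mono HX inj.
  split => // a b y C.
  have Ez := cond_eqz HX _ _ _ C.
  have [x Ex] := eqz_surj (T_functor HX) _ _ _ S (eta_nat (T_functor HX))
    (Tarr_nat HX (T_functor HX) _ (eta_nat HX)) _ _ Ez.
  exists x. exact: (cls_eta_inv HX M _ _ _ _ (esym Ex)).
- move=> [M Sh]. apply: mk_eq.
  + exact: eta_nat.
  + exact: mono_eta_inj.
  + move=> a x. exact: eta_eqz.
  + move=> a t Et. have [b [y Ey]] := Tcls_surj t. subst t.
    have [x ->] := Sh a b y (eqz_cond HX _ _ _ Et). exists x. by rewrite eta_cls_lsh.
Qed.


Definition cst1 {a} (i : 'I_a) : injm 1 a :=
  Injm (fun _ : 'I_1 => i) (fun x y _ => etrans (ord1 x) (esym (ord1 y))).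

Lemma nominal_mono {X : prefun} : nominal X -> Mono X.
Proof.
move=> Nom m n f x x' E.
have pb : is_pb_Inj f f (idm m) (idm m).
  split; first by [].
  move=> d h' k' Hc. exists h'; split; first by [].
  split.
    move=> i. apply: (injfunP f). by rewrite Hc.
  move=> u' H1 _ i. by rewrite -H1.
have [_ U] := Nom _ _ _ _ f f _ _ pb.
have [u [[Hu1 Hu2] _]] := U unit (fun _ => x) (fun _ => x') (fun _ => E).
by rewrite -(Hu1 tt) -(Hu2 tt).
Qed.

Lemma nominal_shat {X : prefun} : nominal X -> Shat X.
Proof.
move=> Nom a b y [e [Phi [Psi [H1 [H2 H3]]]]].
have pb : is_pb_Inj Phi Psi (lshm a b) (lshm a b).
  split; first exact: H1.
  move=> d h' k' Hc.
  have ex : forall i, exists i1, k' i = lshift b i1 /\ h' i = lshift b i1.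
    move=> i. case: (split_ordP (k' i)) => [i1 Ek|j' Ek].
    - exists i1; split => //. apply: (injfunP Phi). by rewrite Hc Ek H1.
    - exfalso. have := Hc i. rewrite Ek. case: (split_ordP (h' i)) => [i0 ->|j ->].
      + rewrite H1 => /(injfunP Psi). exact: lr_neq.
      + exact: H2.
  have [u Hu] := fin_all_exists ex.
  have ui : injective u.
    move=> i i' E. apply: (injfunP k'). by rewrite !(proj1 (Hu _)) E.
  exists (Injm u ui); split.
    move=> i /=. by rewrite (proj2 (Hu i)).
  split.
    move=> i /=. by rewrite (proj1 (Hu i)).
  move=> u' Hu' _ i. apply: (@lshift_inj a b). rewrite /=. 
  have := Hu' i. rewrite lshmE => ->. by rewrite (proj2 (Hu i)).
have [_ U] := Nom _ _ _ _ _ _ _ _ pb.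
have [u [[Hu1 _] _]] := U unit (fun _ => y) (fun _ => y) (fun _ => H3).
exists (u tt). by rewrite Hu1.
Qed.

Lemma shat_gen {X : prefun} (HX : is_functor X) (M : Mono X) (Sh : Shat X) {p a e}
  (h : injm p a) (y : X a) (Phi Psi : injm a e) :
  (forall i, Phi (h i) = Psi (h i)) ->
  (forall i i', (forall k, h k <> i) -> (forall k, h k <> i') -> Phi i <> Psi i') ->
  fmap X Phi y = fmap X Psi y -> exists w, y = fmap X h w.
Proof.
move=> H1 H2 H3.
have pa := @injm_le _ _ h.
have E1 : p + (a - p) = a by rewrite subnKC.
have [s Hs] := @ext_along p (p + (a - p)) a (lshm p (a - p)) h (eq_leq E1).
have Hs' : forall i, s (lshift (a - p) i) = h i := Hs.
have [t [st ts]] := @inj_inv _ _ s (eq_leq (esym E1)).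
pose y' := fmap X t y.
have C : Cond X p (a - p) y'.
  exists e, (compm Phi s), (compm Psi s); split; [|split].
  - move=> i. by rewrite !compmE Hs'.
  - move=> j j'. rewrite !compmE. apply: H2 => k E.
    + rewrite -Hs' in E. move/(injfunP s): E. exact: lr_neq.
    + rewrite -Hs' in E. move/(injfunP s): E. exact: lr_neq.
  - have K1 : forall u, compm (compm Phi s) t u = Phi u by move=> u; rewrite !compmE ts.
    have K2 : forall u, compm (compm Psi s) t u = Psi u by move=> u; rewrite !compmE ts.
    by rewrite /y' -!(proj2 HX) (fmap_ext X K1) (fmap_ext X K2).
have [x Ex] := Sh p (a - p) y' C.
exists x.
have -> : y = fmap X s y'.
  rewrite /y' -(proj2 HX). apply: esym. apply: (fmap_idp HX) => u. by rewrite compmE ts.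
rewrite Ex -(proj2 HX). apply: fmap_ext => i. by rewrite compmE lshmE Hs'.
Qed.

Lemma mono_shat_nominal {X : prefun} (HX : is_functor X) (M : Mono X) (Sh : Shat X) : nominal X.
Proof.
move=> p a b c f g h k [Hc Hu]. split.
  move=> x. rewrite -!(proj2 HX). apply: fmap_ext => i. by rewrite !compmE Hc.
move=> D h' k' Hd.
have key : forall d, exists w, fmap X h w = h' d.
  move=> d.
  pose th_fun (j : 'I_c) : 'I_(c + c) := if [exists i, g i == j] then lshift c j else rshift c j.
  have thi : injective th_fun.
    move=> j1 j2; rewrite /th_fun. case: ifP => _; case: ifP => _.
    - exact: lshift_inj.
    - by move/lr_neq.
    - by move/esym/lr_neq.
    - exact: rshift_inj.
  pose th := Injm th_fun thi.
  have thg : forall j, th (g j) = lshift c (g j).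
    move=> j. rewrite /= /th_fun ifT //. apply/existsP; by exists j.
  have A1 : forall i, compm (lshm c c) f (h i) = compm th f (h i).
    move=> i. by rewrite !compmE Hc thg lshmE.
  have A2 : forall i i', (forall k0, h k0 <> i) -> (forall k0, h k0 <> i') ->
      compm (lshm c c) f i <> compm th f i'.
    move=> i i' ni ni'. rewrite !compmE lshmE /= /th_fun.
    case: ifP => [/existsP [j /eqP Ej] | _]; last exact: lr_neq.
    move/lshift_inj/(injfunP f) => E. subst i'.
    have [u [Hu1 _]] := Hu 1 (cst1 i) (cst1 j) (fun _ => esym Ej).
    exact: (ni (u ord0) (Hu1 ord0)).
  have A3 : fmap X (compm (lshm c c) f) (h' d) = fmap X (compm th f) (h' d).
    rewrite !(proj2 HX) Hd -!(proj2 HX). apply: fmap_ext => j. by rewrite !compmE thg.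
  have [w Ew] := shat_gen HX M Sh h (h' d) (compm (lshm c c) f) (compm th f) A1 A2 A3.
  exists w. by rewrite Ew.
pose u d := proj1_sig (constructive_indefinite_description _ (key d)).
have uh : forall d, fmap X h (u d) = h' d.
  move=> d. exact: (proj2_sig (constructive_indefinite_description _ (key d))).
exists u; split; [split|].
- exact: uh.
- move=> d. apply: (M _ _ g). rewrite -Hd -uh -!(proj2 HX). apply: fmap_ext => i. by rewrite !compmE Hc.
- move=> u' [H1 _]. apply: functional_extensionality => d. apply: (M _ _ h). by rewrite H1 uh.
Qed.

Lemma nominal_char {X : prefun} (HX : is_functor X) : nominal X <-> Mono X /\ Shat X.
Proof.
split.
- move=> N. split; [exact: nominal_mono | exact: nominal_shat].
- move=> [M S]. exact: mono_shat_nominal.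
Qed.


Lemma shatT {X : prefun} (HX : is_functor X) a b (s : T X (a + b)) e (Phi Psi : injm (a + b) e) :
  (forall i, Phi (lshift b i) = Psi (lshift b i)) ->
  (forall j j', Phi (rshift a j) <> Psi (rshift a j')) ->
  Tmap X Phi s = Tmap X Psi s -> exists w, s = Tmap X (lshm a b) w.
Proof.
move=> H1 H2.
have [d [x ->]] := Tcls_surj s.
rewrite !Tmap_cls // => /Tcls_eq/(Tequiv_RT HX) [e' [phi [psi [H3 H4]]]].
move: phi psi H3 H4 => /= phi psi H3 H4.
pose A := compm phi (summ Phi (idm d)).
pose B := compm psi (summ Psi (idm d)).
have HAB : fmap X A x = fmap X B x by rewrite !(proj2 HX).
have Hin : forall j m, compm A (compm (lshm (a + b) d) (rshm a b)) j <> compm A (rshm (a + b) d) m.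
  move=> j m. rewrite !compmE !lshmE !rshmE => /(injfunP A). exact: lr_neq.
pose inner := copair Hin.
have Hout : forall w v, compm B (lshm (a + b) d) w <> inner v.
  move=> w v. rewrite /inner.
  case: (split_ordP v) => [j ->|m ->]; rewrite /A /B; ssimp2; rewrite -H3.
  - move/(injfunP phi)/lshift_inj.
    case: (split_ordP w) => [i ->|j' ->].
    + rewrite -H1 => /(injfunP Phi). exact: lr_neq.
    + move=> E. exact: (H2 j j' (esym E)).
  - move/(injfunP phi). exact: lr_neq.
pose outer := copair Hout.
exists (Tcls (@tp X a (b + d) (fmap X (assocm a b d) x))).
rewrite Tmap_cls //. apply/Tcls_eq/(RT_Tequiv HX).
exists e', B, outer; split.
  move=> w. rewrite /outer. by ssimp2.
rewrite /= -HAB -!(proj2 HX). apply: fmap_ext => u.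
rewrite /outer /inner /A /B.
case: (split_ordP u) => [w ->|m ->]; last by ssimp2.
case: (split_ordP w) => [i ->|j ->]; ssimp2 => //.
by rewrite H1 H3.
Qed.

Lemma D_sober {X DX : prefun} (HX : is_functor X) (HD : is_functor DX) (th : forall a, DX a -> T X a) :
  is_equalizer th (eta (X := T X)) (Tarr (eta (X := X))) -> sober DX.
Proof.
move=> Hth.
have [thn [theq _]] := Hth.
have thi := eqz_inj HD _ _ _ Hth.
have HTX := T_functor HX.
have surj := eqz_surj HTX _ _ _ Hth (eta_nat HTX) (Tarr_nat HX HTX _ (eta_nat HX)).
apply: (proj2 (sober_char HD)); split.
- move=> m n f x x' E. apply: thi. apply: (T_inj HX _ _ f).
  have := thn _ _ f x. have := thn _ _ f x'. rewrite E /= => <- <-. by [].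
- move=> a b y [e [Phi [Psi [H1 [H2 H3]]]]].
  have E : Tmap X Phi (th _ y) = Tmap X Psi (th _ y).
    have := thn _ _ Phi y. have := thn _ _ Psi y. rewrite H3 /= => <- <-. by [].
  have [w Ew] := shatT HX _ _ _ _ _ _ H1 H2 E.
  have Eqw : eta (X := T X) a w = Tarr (eta (X := X)) a w.
    apply: (T_inj HTX _ _ (lshm a b)).
    have L1 := eta_nat HTX a (a + b) (lshm a b) w.
    have L2 := Tarr_nat HX HTX _ (eta_nat HX) a (a + b) (lshm a b) w.
    change (fmap (T (T X)) (lshm a b) (eta (X := T X) a w) = fmap (T (T X)) (lshm a b) (Tarr (eta (X := X)) a w)).
    rewrite -L1 -L2. change (fmap (T X) (lshm a b) w) with (Tmap X (lshm a b) w).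
    rewrite -Ew. exact: theq.
  have [v Ev] := surj a w Eqw.
  exists v. apply: thi. rewrite thn Ev. exact: Ew.
Qed.


Theorem corollary9p7 :
  (forall X : prefun, is_functor X -> (sober X <-> nominal X)) /\
  (forall X : prefun, is_functor X ->
   forall (DX : prefun) (th : forall a, DX a -> T X a),
     is_functor DX ->
     is_equalizer th (eta (X := T X)) (Tarr (eta (X := X))) ->
   forall (DDX : prefun) (th2 : forall a, DDX a -> T DX a),
     is_functor DDX ->
     is_equalizer th2 (eta (X := T DX)) (Tarr (eta (X := DX))) ->
   exists m : forall a, DDX a -> DX a,
     natural DDX DX m /\
     (forall a z, th a (m a z) = mu (Tarr th a (th2 a z))) /\
     is_iso m).
Proof.
split.
- move=> X HX. exact: (iff_trans (sober_char HX) (iff_sym (nominal_char HX))).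
- move=> X HX DX th HD Hth DDX th2 HDD Hth2.
  have HS := D_sober HX HD th Hth.
  have [thn [theq _]] := Hth.
  have [th2n [th2eq univ2]] := Hth2.
  have [_ [_ univS]] := HS.
  have [m [mn [me _]]] := univS DDX HDD th2 th2n th2eq.
  have [k [kn [ke _]]] := univ2 DX HD (eta (X := DX)) (eta_nat HD) (fun a x => eta_eqz HD a x).
  have etai := eqz_inj HD _ _ _ HS.
  have th2i := eqz_inj HDD _ _ _ Hth2.
  exists m; split; first exact: mn. split.
  + move=> a z. rewrite -me. by rewrite (mu_Tarr_eta HX HD th thn).
  + split; first exact: mn. exists k; split; first exact: kn. split.
    * move=> a z. apply: th2i. by rewrite ke me.
    * move=> a w. apply: etai. by rewrite me ke.
Qed.
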